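(* Let $n\ge 3$. For any tuple of integers $m=(m_1,\dots,m_{n-1})$ and any word $w(A,B)\in\mathbb F_2=\langle A,B\rangle$, the kernel $\operatorname{Ker}(\Theta_n^{w,m})$ contains a subgroup isomorphic to the free group of rank $2$.
   Context: For $n\ge 2$, the flat virtual braid group $FVB_n$ is the group with generators $\sigma_1,\dots,\sigma_{n-1},\rho_1,\dots,\rho_{n-1}$ and defining relations: $\sigma_i^2=1$, $\rho_i^2=1$ for $1\le i\le n-1$; $\sigma_i\sigma_{i+1}\sigma_i=\sigma_{i+1}\sigma_i\sigma_{i+1}$, $\rho_i\rho_{i+1}\rho_i=\rho_{i+1}\rho_i\rho_{i+1}$ and $\rho_i\rho_{i+1}\sigma_i=\sigma_{i+1}\rho_i\rho_{i+1}$ for $1\le i\le n-2$; $\sigma_i\sigma_j=\sigma_j\sigma_i$, $\rho_i\rho_j=\rho_j\rho_i$ and $\rho_i\sigma_j=\sigma_j\rho_i$ for $|i-j|\ge 2$. $\mathbb F_{2n}$ is the free group on $x_1,\dots,x_n,y_1,\dots,y_n$; automorphisms compose left to right, $(\varphi\psi)(f)=\psi(\varphi(f))$; generators not mentioned are fixed. For $w(A,B)\in\mathbb F_2$ and $m\in\mathbb Z^{n-1}$, $\Theta_n^{w,m}\colon FVB_n\to\mathrm{Aut}(\mathbb F_{2n})$ is the homomorphism given by $\Theta_n^{w,m}(\sigma_i): x_i\mapsto x_{i+1}a_i,\ x_{i+1}\mapsto x_i a_i^{-1}$, where $a_i=y_{i+1}^{m_2+\dots+m_i}\,w(y_i,y_{i+1})\,y_i^{-(m_1+\dots+m_{i-1})}$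 (empty sums are $0$, so $a_1=w(y_1,y_2)$); $\Theta_n^{w,m}(\rho_i): x_i\mapsto x_{i+1}y_{i+1}^{m_i},\ x_{i+1}\mapsto x_iy_i^{-m_i},\ y_i\mapsto y_{i+1},\ y_{i+1}\mapsto y_i$. *)

(* Defs.v *)
From mathcomp Require Import all_boot all_order all_algebra.
From Stdlib Require Import Relation_Operators.
Set Implicit Arguments. Unset Strict Implicit. Unset Printing Implicit Defensive.
Import GRing.Theory.
Local Open Scope ring_scope.

(* A letter is (generator, inv) where inv = true means the inverse letter. *)
Definition fword (G : eqType) := seq (G * bool).

Definition freduce (G : eqType) (s : fword G) : fword G :=
  foldr (fun x acc => match acc with
                      | y :: t => if (y.1 == x.1) && (y.2 != x.2) then t else x :: acc
                      | [::] => [:: x] end) [::] s.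

Definition finv (G : eqType) (s : fword G) : fword G :=
  rev (map (fun l => (l.1, ~~ l.2)) s).

Definition fsubst (G H : eqType) (phi : G -> fword H) (s : fword G) : fword H :=
  freduce (flatten [seq if l.2 then finv (phi l.1) else phi l.1 | l <- s]).

Definition fpow (G : eqType) (g : G) (k : int) : fword G :=
  match k with
  | Posz k => nseq k (g, false)
  | Negz k => nseq k.+1 (g, true)
  end.

(* ---------- F_2 = <A,B> : generator true = A, false = B ---------- *)
Definition F2word := fword bool.

(* ---------- F_{2n}: generator (true,i) = x_i, (false,i) = y_i ---------- *)
Definition F2ngen := (bool * nat)%type.
Definition xg (i : nat) : F2ngen := (true, i).
Definition yg (i : nat) : F2ngen := (false, i).

(* ---------- FVB_n : generator (true,i) = sigma_i, (false,i) = rho_i ------- *)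
Definition fvbgen := (bool * nat)%type.
Definition sig (i : nat) : fvbgen := (true, i).
Definition rho (i : nat) : fvbgen := (false, i).

(* a word in the generators of FVB_n (all generators are involutions, so
   every element of FVB_n is represented by a positive word) *)
Definition fvb_word (n : nat) (u : seq fvbgen) : Prop :=
  all (fun g => (1 <= g.2 <= n.-1)%N) u.

Inductive fvb_relator (n : nat) : seq fvbgen -> seq fvbgen -> Prop :=
| rel_ss i : (1 <= i <= n.-1)%N -> fvb_relator n [:: sig i; sig i] [::]
| rel_rr i : (1 <= i <= n.-1)%N -> fvb_relator n [:: rho i; rho i] [::]
| rel_sss i : (1 <= i <= n - 2)%N ->
    fvb_relator n [:: sig i; sig i.+1; sig i] [:: sig i.+1; sig i; sig i.+1]
| rel_rrr i : (1 <= i <= n - 2)%N ->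
    fvb_relator n [:: rho i; rho i.+1; rho i] [:: rho i.+1; rho i; rho i.+1]
| rel_rrs i : (1 <= i <= n - 2)%N ->
    fvb_relator n [:: rho i; rho i.+1; sig i] [:: sig i.+1; rho i; rho i.+1]
| rel_ss_far i j : (1 <= i <= n.-1)%N -> (1 <= j <= n.-1)%N -> (i + 2 <= j)%N || (j + 2 <= i)%N ->
    fvb_relator n [:: sig i; sig j] [:: sig j; sig i]
| rel_rr_far i j : (1 <= i <= n.-1)%N -> (1 <= j <= n.-1)%N -> (i + 2 <= j)%N || (j + 2 <= i)%N ->
    fvb_relator n [:: rho i; rho j] [:: rho j; rho i]
| rel_rs_far i j : (1 <= i <= n.-1)%N -> (1 <= j <= n.-1)%N -> (i + 2 <= j)%N || (j + 2 <= i)%N ->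
    fvb_relator n [:: rho i; sig j] [:: sig j; rho i].

Inductive fvb_step (n : nat) : seq fvbgen -> seq fvbgen -> Prop :=
| fvb_step_intro s1 s2 l r : fvb_relator n l r ->
    fvb_step n (s1 ++ l ++ s2) (s1 ++ r ++ s2).

Definition fvb_eq (n : nat) : seq fvbgen -> seq fvbgen -> Prop :=
  clos_refl_sym_trans _ (fvb_step n).

(* inverse of a positive word in FVB_n (generators are involutions) *)
Definition fvb_inv (u : seq fvbgen) : seq fvbgen := rev u.

Definition fvb_subst2 (u v : seq fvbgen) (W : F2word) : seq fvbgen :=
  flatten [seq let g := if l.1 then u else v in
               if l.2 then fvb_inv g else g | l <- W].

Definition wy (w : F2word) (i : nat) : fword F2ngen :=
  fsubst (fun b : bool => [:: (if b then yg i else yg i.+1, false)]) w.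

Definition a_word (w : F2word) (m : nat -> int) (i : nat) : fword F2ngen :=
  fpow (yg i.+1) (\sum_(2 <= j < i.+1) m j) ++ wy w i ++
  fpow (yg i) (- \sum_(1 <= j < i) m j).

Definition theta_gen (w : F2word) (m : nat -> int) (g : fvbgen)
  : F2ngen -> fword F2ngen :=
  let i := g.2 in
  if g.1 then
    fun h => if h == xg i then (xg i.+1, false) :: a_word w m i
             else if h == xg i.+1 then (xg i, false) :: finv (a_word w m i)
             else [:: (h, false)]
  else
    fun h => if h == xg i then (xg i.+1, false) :: fpow (yg i.+1) (m i)
             else if h == xg i.+1 then (xg i, false) :: fpow (yg i) (- m i)
             else if h == yg i then [:: (yg i.+1, false)]
             else if h == yg i.+1 then [:: (yg i, false)]
             else [:: (h, false)].

(* Theta(g_1 ... g_k)(f) = Theta(g_k)( ... Theta(g_1)(f)) : left-to-right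
   composition convention (phi psi)(f) = psi(phi(f)) *)
Definition theta (w : F2word) (m : nat -> int) (u : seq fvbgen)
  (f : fword F2ngen) : fword F2ngen :=
  foldl (fun f g => fsubst (theta_gen w m g) f) f u.

Definition in_kernel (n : nat) (w : F2word) (m : nat -> int) (u : seq fvbgen) : Prop :=
  forall (b : bool) (i : nat), (1 <= i <= n)%N ->
    theta w m u [:: ((b, i), false)] = [:: ((b, i), false)].

(* Main.v *)
Require Import Defs.
From mathcomp Require Import all_boot all_order all_algebra.
From Stdlib Require Import Setoid Morphisms Relation_Operators.
From mathcomp Require Import zify.
Set Implicit Arguments. Unset Strict Implicit. Unset Printing Implicit Defensive.
Notation finv := Defs.finv.
Import GRing.Theory.
Local Open Scope ring_scope.

Section FG.
Variable G : eqType.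
Notation F := (@freduce G).
Definition linv (x : G * bool) : G * bool := (x.1, ~~ x.2).
Definition cr (x : G * bool) (acc : fword G) : fword G :=
  match acc with y :: t => if y == linv x then t else x :: acc | [::] => [:: x] end.

Lemma cancelE (x y : G * bool) : ((y.1 == x.1) && (y.2 != x.2)) = (y == linv x).
Proof. by case: x y => a b [c d]; rewrite /linv /= xpair_eqE; case: b; case: d. Qed.

Lemma F_cons x s : F (x :: s) = cr x (F s).
Proof. rewrite /= /cr; case: (F s) => //= y t; by rewrite -cancelE. Qed.
Lemma F_nil : F [::] = [::]. Proof. by []. Qed.
Arguments freduce : simpl never.
Arguments cr : simpl never.

Lemma linvK x : linv (linv x) = x. Proof. by case: x => a b; rewrite /linv /= negbK. Qed.
Lemma linv_neq x : (x == linv x) = false.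
Proof. by case: x => a b; rewrite /linv xpair_eqE eqxx /=; case: b. Qed.

Fixpoint rd (s : fword G) : bool :=
  match s with x :: ((y :: _) as t) => (y != linv x) && rd t | _ => true end.

Lemma rd_cr x s : rd s -> rd (cr x s).
Proof.
rewrite /cr; case: s => [|y t] //= H.
case: ifP => [_|/negbT Hn] /=; last by rewrite Hn H.
by case: t H => // z t /andP [].
Qed.

Lemma rd_F s : rd (F s).
Proof. elim: s => // x s IH; rewrite F_cons; exact: rd_cr. Qed.

Lemma F_rd s : rd s -> F s = s.
Proof.
elim: s => // x s IH H; rewrite F_cons IH; last by case: s H {IH} => // y t /andP [].
case: s H {IH} => // y t /andP [H _]; by rewrite /cr (negbTE H).
Qed.

Lemma F_idem s : F (F s) = F s.
Proof. apply: F_rd; exact: rd_F. Qed.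

Lemma cr_crK x z : rd z -> cr x (cr (linv x) z) = z.
Proof.
case: z => [|y t] /=; first by move=> _; rewrite /cr eqxx.
move=> H; rewrite {2}/cr linvK; case: ifP => [/eqP Eyx|_] /=; last by rewrite /cr eqxx.
subst y; case: t H => [|y' t] //= /andP [H _].
by rewrite /cr (negbTE H).
Qed.

Lemma F_cr_cat x r t : F (x :: r ++ t) = F (cr x r ++ t).
Proof.
case: r => [|y r] //; rewrite {1}/cr; case: ifP => [/eqP Ey|_] //.
subst y; rewrite cat_cons F_cons F_cons cr_crK //; exact: rd_F.
Qed.

Lemma F_catl s t : F (s ++ t) = F (F s ++ t).
Proof.
elim: s => // x s IH.
by rewrite cat_cons F_cons IH -F_cons F_cr_cat F_cons.
Qed.

Lemma F_catr s t : F (s ++ t) = F (s ++ F t).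
Proof. elim: s => [|x s IH]; first by rewrite F_idem. by rewrite !cat_cons !F_cons IH. Qed.

Lemma finv_cons x (s : fword G) : finv (x :: s) = finv s ++ [:: linv x].
Proof. by rewrite /Defs.finv /= rev_cons cats1. Qed.
Lemma finv_cat (s t : fword G) : finv (s ++ t) = finv t ++ finv s.
Proof. by rewrite /Defs.finv map_cat rev_cat. Qed.
Lemma finvK (s : fword G) : finv (finv s) = s.
Proof. rewrite /Defs.finv map_rev revK -map_comp; rewrite map_id_in //; by case=> a b _ /=; rewrite negbK. Qed.
Lemma finv_nil : finv (G:=G) [::] = [::]. Proof. by []. Qed.
Lemma finv1 x : finv [:: x] = [:: linv x]. Proof. by []. Qed.

Lemma F_invr s : F (s ++ finv s) = [::].
Proof.
elim: s => // x s IH.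
rewrite finv_cons cat_cons catA F_cons F_catl IH /= F_cons F_nil /cr eqxx //.
Qed.
Lemma F_invl s : F (finv s ++ s) = [::].
Proof. by rewrite -{2}(finvK s) F_invr. Qed.

Lemma F_finvF s : F (finv (F s)) = F (finv s).
Proof.
have E1 : F (finv (F s) ++ s) = [::] by rewrite F_catr F_invl.
transitivity (F (finv (F s) ++ F (s ++ finv s))); first by rewrite F_invr cats0.
by rewrite -F_catr catA F_catl E1.
Qed.

Definition feq (s t : fword G) := F s = F t.
Global Instance feq_equiv : Equivalence feq.
Proof. split. by move=> x. by move=> x y H. by move=> x y z H1 H2; rewrite /feq H1. Qed.

Global Instance cat_proper : Proper (feq ==> feq ==> feq) (@cat (G * bool)).
Proof. move=> s s' H t t' H'; by rewrite /feq F_catl H -F_catl F_catr H' -F_catr. Qed.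
Global Instance cons_proper x : Proper (feq ==> feq) (cons x).
Proof. by move=> s t H; rewrite /feq !F_cons H. Qed.
Global Instance finv_proper : Proper (feq ==> feq) (@finv G).
Proof. by move=> s t H; rewrite /feq -F_finvF H F_finvF. Qed.

Lemma feqF s : feq (F s) s. Proof. exact: F_idem. Qed.
Lemma feq_invr s : feq (s ++ finv s) [::]. Proof. exact: F_invr. Qed.
Lemma feq_invl s : feq (finv s ++ s) [::]. Proof. exact: F_invl. Qed.
End FG.

Arguments feq {G} s t.
Arguments linv {G} x.
Section Sub.
Variables (G H : eqType) (phi : G -> fword H).
Definition img (l : G * bool) : fword H := if l.2 then finv (phi l.1) else phi l.1.
Definition fm (s : fword G) : fword H := flatten [seq img l | l <- s].
Lemma fsubstE s : fsubst phi s = freduce (fm s). Proof. by []. Qed.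
Lemma fm_cat s t : fm (s ++ t) = fm s ++ fm t.
Proof. by rewrite /fm map_cat flatten_cat. Qed.
Lemma fm_cons x s : fm (x :: s) = img x ++ fm s. Proof. by []. Qed.
Lemma img_linv x : img (linv x) = finv (img x).
Proof. by case: x => a [] //=; rewrite /img /= finvK. Qed.

Lemma fsubst_feq s : feq (fsubst phi s) (fm s). Proof. exact: feqF. Qed.

Lemma fm_cr x r : feq (fm (cr x r)) (img x ++ fm r).
Proof.
case: r => [|y r]; first by rewrite /cr fm_cons.
rewrite /cr; case: ifP => [/eqP ->|_]; last by rewrite fm_cons.
by rewrite fm_cons img_linv catA feq_invr.
Qed.

Lemma fsubstF s : fsubst phi (freduce s) = fsubst phi s.
Proof.
elim: s => // x s IH.
rewrite fsubstE F_cons.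
have E : feq (fm (cr x (freduce s))) (fm (x :: s)).
  by rewrite fm_cr fm_cons -(fsubst_feq (freduce s)) IH fsubst_feq.
exact: E.
Qed.

Lemma fsubst_proper s t : feq s t -> fsubst phi s = fsubst phi t.
Proof. by move=> E; rewrite -fsubstF E fsubstF. Qed.

Lemma fsubst_cat s t : feq (fsubst phi (s ++ t)) (fsubst phi s ++ fsubst phi t).
Proof. by rewrite !fsubst_feq fm_cat. Qed.
Lemma fsubst_cons x s : feq (fsubst phi (x :: s)) (img x ++ fsubst phi s).
Proof. by rewrite !fsubst_feq fm_cons. Qed.
Lemma fsubst_nil : fsubst phi [::] = [::]. Proof. by []. Qed.
Lemma fsubst1 g : feq (fsubst phi [:: (g, false)]) (phi g).
Proof. by rewrite fsubst_feq /fm /= cats0. Qed.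
Lemma fsubst1' g : fsubst phi [:: (g, false)] = freduce (phi g).
Proof. by rewrite fsubstE /fm /= cats0. Qed.

Lemma fsubst_finv s : feq (fsubst phi (finv s)) (finv (fsubst phi s)).
Proof.
elim: s => [|x s IH] //.
rewrite finv_cons fsubst_cat IH (fsubst_cons x s) finv_cat.
apply: cat_proper; first by [].
by rewrite fsubst_feq /fm /= cats0 img_linv.
Qed.
End Sub.

Global Instance fsubst_proper' (G H : eqType) (phi : G -> fword H) :
  Proper (feq ==> feq) (fsubst phi).
Proof. by move=> s t E; rewrite (fsubst_proper phi E). Qed.

Lemma feq_eq (H : eqType) (s t : fword H) : feq s t -> freduce s = s -> freduce t = t -> s = t.
Proof. by rewrite /feq => E Hs Ht; rewrite -Hs E Ht. Qed.

Lemma fsubst_red (G H : eqType) (phi : G -> fword H) s : freduce (fsubst phi s) = fsubst phi s.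
Proof. exact: F_idem. Qed.

Lemma fsubst_ext (G H : eqType) (phi psi : G -> fword H) s :
  (forall g, feq (phi g) (psi g)) -> fsubst phi s = fsubst psi s.
Proof.
move=> E; apply: feq_eq; try exact: fsubst_red.
elim: s => [|x s IH] //.
rewrite !fsubst_cons IH; apply: cat_proper => //.
by case: x => g [] /=; rewrite /img /= E.
Qed.

Lemma fsubst_comp (G H K : eqType) (phi : G -> fword H) (psi : H -> fword K) s :
  fsubst psi (fsubst phi s) = fsubst (fun g => fsubst psi (phi g)) s.
Proof.
apply: feq_eq; try exact: fsubst_red.
elim: s => [|x s IH] //.
rewrite (@fsubst_cons _ _ (fun g => fsubst psi (phi g)) x s) -IH.
rewrite (fsubst_proper psi (@fsubst_cons _ _ phi x s)) fsubst_cat.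
apply: cat_proper => //.
case: x => g [] /=; rewrite /img /=; last by [].
by rewrite fsubst_finv.
Qed.

Lemma fsubst_id (G : eqType) (s : fword G) : fsubst (fun g => [:: (g, false)]) s = freduce s.
Proof.
rewrite fsubstE; congr freduce; elim: s => // [[g b] s] IH.
by rewrite fm_cons IH; case: b.
Qed.

Section Pow.
Variable G : eqType.
Lemma fpow_opp (g : G) k : fpow g (- k) = finv (fpow g k).
Proof.
case: k => [[|k]|k] //=.
- by rewrite /Defs.finv (_ : (g, false) :: nseq k (g, false) = nseq k.+1 (g,false)) // map_nseq rev_nseq.
- by rewrite /Defs.finv (_ : (g, true) :: nseq k (g, true) = nseq k.+1 (g,true)) // map_nseq rev_nseq.
Qed.
Lemma fpow_cancel (g : G) k : feq (fpow g (- k) ++ fpow g k) [::].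
Proof. by rewrite fpow_opp feq_invl. Qed.
Lemma fpow_cancel' (g : G) k : feq (fpow g k ++ fpow g (- k)) [::].
Proof. by rewrite fpow_opp feq_invr. Qed.

Lemma rd_nseq n (x : G * bool) : rd (nseq n x).
Proof. elim: n => // [[|n]] //= IH; by rewrite IH linv_neq. Qed.

Lemma fpow_red (g : G) k : freduce (fpow g k) = fpow g k.
Proof. apply: F_rd; case: k => k; exact: rd_nseq. Qed.
End Pow.

Lemma fsubst_nseq (G H : eqType) (phi : G -> fword H) g g' b n :
  freduce (phi g) = [:: (g', false)] -> fsubst phi (nseq n (g, b)) = nseq n (g', b).
Proof.
move=> Hg0; have Hg : feq (phi g) [:: (g', false)] by rewrite /feq Hg0.
apply: feq_eq; [|exact: fsubst_red|exact: F_rd (rd_nseq _ _)].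
elim: n => [|n IH] //=.
rewrite fsubst_cons IH.
have -> : feq (img phi (g, b)) [:: (g', b)].
  case: (b); rewrite /img /=; last exact: Hg.
  by rewrite Hg.
by [].
Qed.

Lemma fsubst_fpow (G H : eqType) (phi : G -> fword H) g g' k :
  freduce (phi g) = [:: (g', false)] -> fsubst phi (fpow g k) = fpow g' k.
Proof. by case: k => k; apply: fsubst_nseq. Qed.

Definition Wg (w : F2word) (a b : nat) : fword F2ngen :=
  fsubst (fun c : bool => [:: (if c then yg a else yg b, false)]) w.

Lemma fsubst_W (phi : F2ngen -> fword F2ngen) w a b a' b' :
  freduce (phi (yg a)) = [:: (yg a', false)] -> freduce (phi (yg b)) = [:: (yg b', false)] ->
  fsubst phi (Wg w a b) = Wg w a' b'.
Proof.
move=> Ha Hb; rewrite /Wg fsubst_comp; apply: fsubst_ext => c.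
by case: c; rewrite fsubst1' ?Ha ?Hb.
Qed.

Lemma neqSn i : (i.+1 == i) = false. Proof. by elim: i. Qed.
Lemma neqnS i : (i == i.+1) = false. Proof. by elim: i. Qed.
Lemma xyE a b : (xg a == yg b) = false. Proof. by []. Qed.
Lemma yxE a b : (yg a == xg b) = false. Proof. by []. Qed.
Lemma xxE a b : (xg a == xg b) = (a == b). Proof. by rewrite /xg xpair_eqE. Qed.
Lemma yyE a b : (yg a == yg b) = (a == b). Proof. by rewrite /yg xpair_eqE. Qed.

Ltac sq := rewrite /= ?xyE ?yxE ?yyE ?xxE ?neqSn ?neqnS ?eqxx /=.

Section Theta.
Variables (w : F2word) (m : nat -> int).
Notation theta := (theta w m).
Notation tg := (theta_gen w m).

Lemma theta_cat s t f : theta (s ++ t) f = theta t (theta s f).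
Proof. by rewrite /Defs.theta foldl_cat. Qed.
Lemma theta_cons g s f : theta (g :: s) f = theta s (fsubst (tg g) f).
Proof. by []. Qed.
Lemma theta_nil f : theta [::] f = f. Proof. by []. Qed.

Lemma rho_invol i f : theta [:: rho i; rho i] f = freduce f.
Proof.
rewrite theta_cons theta_cons theta_nil fsubst_comp -fsubst_id.
apply: fsubst_ext => h.
case: (eqVneq h (xg i)) => [->|n1].
  rewrite /theta_gen /= eqxx fsubst_cons (@fsubst_fpow _ _ _ (yg i.+1) (yg i)); last by sq.
  by rewrite /img; sq; rewrite fpow_cancel.
case: (eqVneq h (xg i.+1)) => [->|n2].
  rewrite /theta_gen; sq; rewrite fsubst_cons (@fsubst_fpow _ _ _ (yg i) (yg i.+1)); last by sq.
  by rewrite /img; sq; rewrite fpow_cancel'.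
case: (eqVneq h (yg i)) => [->|n3].
  by rewrite /theta_gen; sq; rewrite fsubst1; sq.
case: (eqVneq h (yg i.+1)) => [->|n4].
  by rewrite /theta_gen; sq; rewrite fsubst1; sq.
rewrite /theta_gen /= (negbTE n1) (negbTE n2) (negbTE n3) (negbTE n4) fsubst1 /=.
by rewrite (negbTE n1) (negbTE n2) (negbTE n3) (negbTE n4).
Qed.
End Theta.

Section Canc.
Variable G : eqType.
Implicit Types s t : fword G.
Lemma cancel_r s t : feq (s ++ finv s ++ t) t.
Proof. by rewrite catA feq_invr. Qed.
Lemma cancel_l s t : feq (finv s ++ s ++ t) t.
Proof. by rewrite catA feq_invl. Qed.
Lemma cancel_r' s : feq (s ++ finv s) [::].
Proof. exact: feq_invr. Qed.
Lemma cancel_l' s : feq (finv s ++ s) [::].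
Proof. exact: feq_invl. Qed.
Lemma fcancel_r (g : G) k t : feq (fpow g k ++ fpow g (- k) ++ t) t.
Proof. by rewrite catA fpow_cancel'. Qed.
Lemma fcancel_l (g : G) k t : feq (fpow g (- k) ++ fpow g k ++ t) t.
Proof. by rewrite catA fpow_cancel. Qed.
Lemma fcancel_r' (g : G) k : feq (fpow g k ++ fpow g (- k)) [::].
Proof. exact: fpow_cancel'. Qed.
Lemma fcancel_l' (g : G) k : feq (fpow g (- k) ++ fpow g k) [::].
Proof. exact: fpow_cancel. Qed.
End Canc.

Section U.
Variables (w : F2word) (m : nat -> int).
Notation theta := (theta w m).
Notation tg := (theta_gen w m).
Notation k := (m 2).
Notation W := (Wg w).

Lemma aword1 : a_word w m 1 = W 1 2.
Proof. by rewrite /a_word !big_geq //= cats0. Qed.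

Definition psiT (h : F2ngen) : fword F2ngen :=
  if h == xg 1 then (xg 3, false) :: fpow (yg 3) k ++ W 1 3
  else if h == xg 2 then (xg 1, false) :: finv (W 1 3)
  else if h == xg 3 then (xg 2, false) :: fpow (yg 2) (- k)
  else if h == yg 2 then [:: (yg 3, false)]
  else if h == yg 3 then [:: (yg 2, false)]
  else [:: (h, false)].

Lemma thetaT f : theta [:: sig 1; rho 2] f = fsubst psiT f.
Proof.
rewrite theta_cons theta_cons theta_nil fsubst_comp.
apply: fsubst_ext => -[[] j].
- case: j => [|[|[|[|j]]]].
  + by rewrite /theta_gen /psiT; sq; rewrite fsubst1; sq.
  + rewrite /theta_gen /psiT; sq. rewrite aword1 fsubst_cons /img; sq.
    by rewrite (@fsubst_W _ w 1 2 1 3).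
  + rewrite /theta_gen /psiT; sq. rewrite aword1 fsubst_cons /img; sq.
    by rewrite fsubst_finv (@fsubst_W _ w 1 2 1 3).
  + by rewrite /theta_gen /psiT; sq; rewrite fsubst1; sq.
  + by rewrite /theta_gen /psiT; sq; rewrite fsubst1; sq.
- case: j => [|[|[|[|j]]]]; by rewrite /theta_gen /psiT; sq; rewrite fsubst1; sq.
Qed.

Definition psiP (h : F2ngen) : fword F2ngen :=
  if h == xg 1 then (xg 2, false) :: W 1 2
  else if h == xg 2 then (xg 3, false) :: fpow (yg 3) k ++ W 1 3 ++ finv (W 1 2)
  else if h == xg 3 then (xg 1, false) :: finv (W 1 3) ++ fpow (yg 3) (- k)
  else [:: (h, false)].

Lemma thetaP f : theta [:: sig 1; rho 2; sig 1; rho 2] f = fsubst psiP f.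
Proof.
rewrite (theta_cat w m [:: sig 1; rho 2] [:: sig 1; rho 2]) !thetaT fsubst_comp.
apply: fsubst_ext => -[[] j].
- case: j => [|[|[|[|j]]]].
  + by rewrite /psiT /psiP; sq; rewrite fsubst1; sq.
  + rewrite {2}/psiT /psiP; sq. rewrite fsubst_cons fsubst_cat /img; sq.
    rewrite (@fsubst_fpow _ _ psiT (yg 3) (yg 2)) // (@fsubst_W psiT w 1 3 1 2) // /psiT; sq.
    by rewrite catA fpow_cancel.
  + rewrite {2}/psiT /psiP; sq. rewrite fsubst_cons fsubst_finv /img; sq.
    rewrite (@fsubst_W psiT w 1 3 1 2) // /psiT; sq.
    by rewrite /feq -catA.
  + rewrite {2}/psiT /psiP; sq. rewrite fsubst_cons /img; sq.
    by rewrite (@fsubst_fpow _ _ psiT (yg 2) (yg 3)) // /psiT; sq.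
  + by rewrite /psiT /psiP; sq; rewrite fsubst1; sq.
- case: j => [|[|[|[|j]]]]; by rewrite /psiT /psiP; sq; rewrite fsubst1; sq.
Qed.

Definition psiP2 (h : F2ngen) : fword F2ngen :=
  if h == xg 1 then (xg 3, false) :: fpow (yg 3) k ++ W 1 3
  else if h == xg 2 then (xg 1, false) :: finv (W 1 2)
  else if h == xg 3 then (xg 2, false) :: W 1 2 ++ finv (W 1 3) ++ fpow (yg 3) (- k)
  else [:: (h, false)].

Lemma fpsiP_W a b : (a < 4)%N -> (b < 4)%N -> fsubst psiP (W a b) = W a b.
Proof.
move=> Ha Hb; apply: fsubst_W; rewrite /psiP; sq.
  by case: a Ha => [|[|[|[|]]]].
by case: b Hb => [|[|[|[|]]]].
Qed.
Lemma fpsiP_pow k' : fsubst psiP (fpow (yg 3) k') = fpow (yg 3) k'.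
Proof. by apply: fsubst_fpow; rewrite /psiP; sq. Qed.

Lemma stepP2 h : feq (fsubst psiP (psiP h)) (psiP2 h).
Proof.
case: h => -[] j.
- case: j => [|[|[|[|j]]]].
  + by rewrite /psiP /psiP2; sq; rewrite fsubst1; sq.
  + rewrite {2}/psiP /psiP2; sq. rewrite fsubst_cons /img; sq.
    rewrite fpsiP_W // /psiP; sq. by rewrite -!catA cancel_l' ?cats0.
  + rewrite {2}/psiP /psiP2; sq. rewrite fsubst_cons !fsubst_cat fsubst_finv /img; sq.
    rewrite !fpsiP_W // fpsiP_pow /psiP; sq.
    by rewrite -!catA fcancel_l cancel_l.
  + rewrite {2}/psiP /psiP2; sq. rewrite fsubst_cons !fsubst_cat fsubst_finv /img; sq.
    by rewrite !fpsiP_W // fpsiP_pow /psiP; sq; rewrite -?catA.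
  + by rewrite /psiP /psiP2; sq; rewrite fsubst1; sq.
- case: j => [|[|[|[|j]]]]; by rewrite /psiP /psiP2; sq; rewrite fsubst1; sq.
Qed.

Lemma stepP3 h : feq (fsubst psiP (psiP2 h)) [:: (h, false)].
Proof.
case: h => -[] j.
- case: j => [|[|[|[|j]]]].
  + by rewrite /psiP2; sq; rewrite fsubst1 /psiP; sq.
  + rewrite /psiP2; sq. rewrite fsubst_cons !fsubst_cat /img; sq.
    rewrite !fpsiP_W // fpsiP_pow /psiP; sq.
    by rewrite -!catA fcancel_l cancel_l'.
  + rewrite /psiP2; sq. rewrite fsubst_cons fsubst_finv /img; sq.
    rewrite !fpsiP_W // /psiP; sq.
    by rewrite cancel_r'.
  + rewrite /psiP2; sq. rewrite fsubst_cons !fsubst_cat fsubst_finv /img; sq.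
    rewrite !fpsiP_W // fpsiP_pow /psiP; sq.
    by rewrite -!catA cancel_l cancel_r fcancel_r'.
  + by rewrite /psiP2; sq; rewrite fsubst1 /psiP; sq.
- case: j => [|[|[|[|j]]]]; by rewrite /psiP2; sq; rewrite fsubst1 /psiP; sq.
Qed.

Definition U0 : seq fvbgen := [:: sig 1; rho 2; sig 1; rho 2].
Definition uw : seq fvbgen := U0 ++ U0 ++ U0.

Lemma theta_uw f : theta uw f = freduce f.
Proof.
rewrite /uw !theta_cat !thetaP !fsubst_comp -fsubst_id; apply: fsubst_ext => h.
by rewrite -fsubst_comp stepP2 stepP3.
Qed.
End U.

Definition vw : seq fvbgen := [:: rho 2; rho 1] ++ uw ++ [:: rho 1; rho 2].

Lemma theta_F w m g s f : theta w m (g :: s) (freduce f) = theta w m (g :: s) f.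
Proof. by rewrite !theta_cons fsubstF. Qed.

Lemma theta_vw w m f : theta w m vw f = freduce f.
Proof.
rewrite /vw (theta_cat w m [:: rho 2; rho 1]) (theta_cat w m uw) theta_uw theta_F.
rewrite -theta_cat.
rewrite (_ : [:: rho 2; rho 1] ++ [:: rho 1; rho 2] = [:: rho 2] ++ [:: rho 1; rho 1] ++ [:: rho 2]) //.
rewrite !theta_cat rho_invol theta_F -theta_cat.
exact: rho_invol.
Qed.

Local Close Scope ring_scope.

Section Psi.
Local Open Scope nat_scope.

Definition lam (a b : nat) : fword bool :=
  match a, b with
  | 1, 2 | 2, 3 => [:: (true, false)]
  | 2, 1 | 3, 2 => [:: (true, true)]
  | 1, 3 => [:: (false, false)]
  | 3, 1 => [:: (false, true)]
  | _, _ => [::]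
  end.

Definition sw (i k : nat) : nat := if k == i then i.+1 else if k == i.+1 then i else k.
Definition swapf (i : nat) (g : nat -> nat) : nat -> nat := fun k => g (sw i k).

Fixpoint out (g : nat -> nat) (u : seq fvbgen) : fword bool :=
  match u with
  | [::] => [::]
  | x :: u' => (if x.1 then lam (g x.2) (g x.2.+1) else [::]) ++ out (swapf x.2 g) u'
  end.
Fixpoint fin (g : nat -> nat) (u : seq fvbgen) : nat -> nat :=
  match u with [::] => g | x :: u' => fin (swapf x.2 g) u' end.

Lemma swK i k : sw i (sw i k) = k.
Proof. rewrite /sw; repeat case: eqP; lia. Qed.
Lemma sw_braid i k : sw i (sw i.+1 (sw i k)) = sw i.+1 (sw i (sw i.+1 k)).
Proof. rewrite /sw; repeat case: eqP; lia. Qed.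
Lemma sw_far i j k : (i + 2 <= j) || (j + 2 <= i) -> sw i (sw j k) = sw j (sw i k).
Proof. move=> H; rewrite /sw; repeat case: eqP; lia. Qed.
Lemma sw_other i k : k != i -> k != i.+1 -> sw i k = k.
Proof. move=> /negPf H1 /negPf H2; by rewrite /sw H1 H2. Qed.
Lemma sw_l i : sw i i = i.+1. Proof. by rewrite /sw eqxx. Qed.
Lemma sw_r i : sw i i.+1 = i. Proof. by rewrite /sw eqxx; case: eqP; lia. Qed.
Lemma sw_2 i : sw i i.+2 = i.+2. Proof. rewrite /sw; repeat case: eqP; lia. Qed.
Lemma sw_m i : sw i.+1 i = i. Proof. rewrite /sw; repeat case: eqP; lia. Qed.

Lemma swapf_ext i g g' : g =1 g' -> swapf i g =1 swapf i g'.
Proof. by move=> E k; rewrite /swapf E. Qed.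
Lemma out_ext u g g' : g =1 g' -> out g u = out g' u.
Proof.
elim: u g g' => //= x u IH g g' E; rewrite (IH _ _ (swapf_ext x.2 E)) !E //.
Qed.
Lemma fin_ext u g g' : g =1 g' -> fin g u =1 fin g' u.
Proof. elim: u g g' => //= x u IH g g' E; exact: IH (swapf_ext _ E). Qed.
Lemma out_cat g s t : out g (s ++ t) = out g s ++ out (fin g s) t.
Proof. by elim: s g => //= x s IH g; rewrite IH catA. Qed.
Lemma fin_cat g s t : fin g (s ++ t) = fin (fin g s) t.
Proof. by elim: s g => //= x s IH g. Qed.
Lemma swapf_inj i g : injective g -> injective (swapf i g).
Proof. move=> Hg a b /Hg E; by rewrite -(swK i a) E swK. Qed.
Lemma fin_inj g s : injective g -> injective (fin g s).
Proof. elim: s g => //= x s IH g Hg; apply: IH; exact: swapf_inj. Qed.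

Lemma lam_sym a b : lam b a = finv (lam a b).
Proof. by case: a => [|[|[|[|a]]]]; case: b => [|[|[|[|b]]]]. Qed.

Lemma lam_braid a b c :
  feq (lam a b ++ lam a c ++ lam b c) (lam b c ++ lam a c ++ lam a b).
Proof.
by case: a => [|[|[|[|a]]]]; case: b => [|[|[|[|b]]]]; case: c => [|[|[|[|c]]]].
Qed.

Lemma lam_comm a b c d : a != c -> a != d -> b != c -> b != d ->
  feq (lam a b ++ lam c d) (lam c d ++ lam a b).
Proof.
case: a => [|[|[|[|a]]]]; case: b => [|[|[|[|b]]]]; case: c => [|[|[|[|c]]]];
  case: d => [|[|[|[|d]]]]; by [].
Qed.
End Psi.

Section Inv.
Local Open Scope nat_scope.

Lemma far_facts i j : (i + 2 <= j) || (j + 2 <= i) ->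
  [/\ i != j, i != j.+1, i.+1 != j & i.+1 != j.+1].
Proof. move=> H; split; apply/eqP; lia. Qed.

Lemma rel_ok n l r g : fvb_relator n l r -> injective g ->
  feq (out g l) (out g r) /\ fin g l =1 fin g r.
Proof.
move=> R Hg; case: R => [i _|i _|i _|i _|i _|i j _ _ H|i j _ _ H|i j _ _ H].
- split; last by move=> k; rewrite /= /swapf swK.
  rewrite /= /swapf sw_l sw_r cats0 lam_sym; exact: feq_invl.
- by split => // k; rewrite /= /swapf swK.
- split; last by move=> k; rewrite /= /swapf sw_braid.
  rewrite /= /swapf; do 3 rewrite ?sw_r ?sw_m ?sw_l ?sw_2.
  rewrite !cats0; exact: lam_braid.
- by split => // k; rewrite /= /swapf sw_braid.
- split; last by move=> k; rewrite /= /swapf sw_braid.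
  by rewrite /= /swapf; do 3 rewrite ?sw_r ?sw_m ?sw_l ?sw_2.
- have [h1 h2 h3 h4] := far_facts H.
  split; last by move=> k; rewrite /= /swapf sw_far.
  rewrite /= /swapf !cats0 (@sw_other i j) 1?eq_sym // (@sw_other i j.+1) ?eqSS 1?eq_sym //.
  rewrite (@sw_other j i) // (@sw_other j i.+1) ?eqSS //.
  apply: lam_comm; by rewrite (inj_eq Hg).
- have [h1 h2 h3 h4] := far_facts H.
  by split => // k; rewrite /= /swapf sw_far.
- have [h1 h2 h3 h4] := far_facts H.
  split; last by move=> k; rewrite /= /swapf sw_far.
  by rewrite /= /swapf !cats0 (@sw_other i j) 1?eq_sym // (@sw_other i j.+1) ?eqSS 1?eq_sym //.
Qed.
End Inv.

Lemma step_ok n s t g : fvb_step n s t -> injective g -> feq (out g s) (out g t).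
Proof.
case=> s1 s2 l r R Hg.
have [E1 E2] := rel_ok (g:=fin g s1) R (fin_inj (s:=s1) Hg).
rewrite !out_cat (out_ext s2 E2).
by apply: cat_proper => //; apply: cat_proper.
Qed.

Lemma eq_ok n s t : fvb_eq n s t -> feq (out id s) (out id t).
Proof.
elim => [x y H|x|x y _ IH|x y z _ IH1 _ IH2].
- by apply: (step_ok H) => a b.
- by [].
- by symmetry.
- by rewrite IH1.
Qed.

Definition blk (l : bool * bool) : seq fvbgen :=
  let g := if l.1 then uw else vw in if l.2 then fvb_inv g else g.

Lemma fin_blk l g : fin g (blk l) =1 g.
Proof. by case: l => [[] []] k; case: k => [|[|[|[|k]]]]. Qed.

Definition bimg l := out id (blk l).

Lemma out_flat W : out id (fvb_subst2 uw vw W) = flatten [seq bimg l | l <- W].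
Proof.
elim: W => // l W IH.
rewrite /fvb_subst2 /= -/(blk l) out_cat -/(fvb_subst2 uw vw W) -IH.
congr (_ ++ _); apply: out_ext; exact: fin_blk.
Qed.

Lemma rd_cat (G : eqType) (x : G * bool) s t :
  rd (x :: s) -> rd t -> (if t is y :: _ then y != linv (last x s) else true) ->
  rd (x :: s ++ t).
Proof.
elim: s x => [|y s IH] x /=.
  by case: t => // y t _ -> /= ->.
move=> /andP [H1 H2] Ht Hc; rewrite H1 /=; exact: IH.
Qed.

Definition dflt : bool * bool := (true, true).
Lemma bimg_cons l : bimg l = head dflt (bimg l) :: behead (bimg l).
Proof. by case: l => [[] []]. Qed.
Lemma bimg_rd l : rd (bimg l).
Proof. by case: l => [[] []]. Qed.
Lemma bimg_compat l l' : l' != linv l ->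
  head dflt (bimg l') != linv (last dflt (bimg l)).
Proof. by case: l => [[] []]; case: l' => [[] []]. Qed.

Lemma rd_flat W : rd W -> rd (flatten [seq bimg l | l <- W]).
Proof.
elim: W => // l W IH HW.
have HW' : rd W by case: W HW {IH} => // l' W /andP [].
rewrite /= bimg_cons; apply: rd_cat.
- rewrite -bimg_cons; exact: bimg_rd.
- exact: IH.
case: W HW {IH HW'} => // l' W /andP [Hl _] /=.
rewrite bimg_cons /=.
have -> : last (head dflt (bimg l)) (behead (bimg l)) = last dflt (bimg l).
  by rewrite [in RHS]bimg_cons.
exact: bimg_compat.
Qed.

Theorem mainTheorem10 (n : nat) (w : F2word) (m : nat -> int) :
  (3 <= n)%N ->
  exists u v : seq fvbgen,
    [/\ fvb_word n u, fvb_word n v, in_kernel n w m u, in_kernel n w m v &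
        forall W : F2word, W <> [::] -> freduce W = W ->
          ~ fvb_eq n (fvb_subst2 u v W) [::]].
Proof.
move=> Hn; exists uw, vw.
have h1 : (1 <= n.-1)%N by lia.
have h2 : (2 <= n.-1)%N by lia.
split.
- by rewrite /fvb_word /= h1 h2.
- by rewrite /fvb_word /= h1 h2.
- by move=> b i _; rewrite theta_uw.
- by move=> b i _; rewrite theta_vw.
move=> W Wne Wred Heq.
have := eq_ok Heq; rewrite out_flat /feq /= F_rd; last by apply: rd_flat; rewrite -Wred; exact: rd_F.
case: W Wne {Wred Heq} => // l W _.
by rewrite /= bimg_cons.
Qed.
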